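(* Let $a>1$ be an integer, and define the sequence $(u_i)_{i\geq 0}$ by $u_0=0$, $u_1=1$, and $u_{i+1}=au_i+u_{i-1}$ for $i=1,2,3,\ldots$. Then no integer $x$ can be written as $x=u_m+au_n$ with $m\in\{0,1,2,\ldots\}$ and $n\in\{1,2,3,\ldots\}$ in two or more different ways (i.e., for two distinct pairs $(m,n)$), except in the case $a=2$ and $x=4=u_0+au_2=u_2+au_1$. *)

(* Defs.v *)
From mathcomp Require Import all_boot.

Fixpoint u (a : nat) (i : nat) : nat :=
  match i with
  | 0 => 0
  | S j => match j with
           | 0 => 1
           | S k => a * u a j + u a k
           end
  end.

(* Main.v *)
Require Import Defs.
From mathcomp Require Import all_boot.
From mathcomp Require Import zify.

Lemma urec a i : u a i.+2 = a * u a i.+1 + u a i.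
Proof. by []. Qed.

Lemma u_step a i : 1 < a -> u a i < u a i.+1.
Proof.
move=> ha; elim: i => [|i IH] //.
case: i IH => [|i] IH; first by rewrite urec; have -> : u a 1 = 1 by []; have -> : u a 0 = 0 by []; lia.
have -> : u a i.+3 = a * u a i.+2 + u a i.+1 by []. nia.
Qed.

Arguments u_step {a} i.
Lemma u_lt a i j : 1 < a -> i < j -> u a i < u a j.
Proof.
move=> ha; elim: j => [|j IH] // hij.
rewrite ltnS leq_eqVlt in hij.
case/orP: hij => [/eqP -> | h]; first by exact: u_step.
have := IH h; have := u_step j ha; lia.
Qed.

Arguments u_lt {a i j}.
Lemma u_le a i j : 1 < a -> i <= j -> u a i <= u a j.
Proof.
move=> ha; rewrite leq_eqVlt; case/orP => [/eqP -> //| h].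
by apply: ltnW; apply: u_lt.
Qed.

Arguments u_le {a i j}.
Lemma u_inj a i j : 1 < a -> u a i = u a j -> i = j.
Proof.
move=> ha e; case: (ltngtP i j) => // h.
- by have := u_lt ha h; lia.
- by have := u_lt ha h; lia.
Qed.

Arguments u_inj {a i j}.
Lemma core a m n m' n' : 1 < a -> 0 < n' -> n' < n ->
  u a m + a * u a n = u a m' + a * u a n' ->
  a = 2 /\ u a m + a * u a n = 4.
Proof.
move=> ha hn' hnn e.
have hun := u_lt ha hnn.
have hun1 : 1 <= u a n' by have := u_lt ha hn'.
case: (ltngtP m' n.+1) => hm'.
-
  case: n hnn hun hm' e => [|[|q]] hnn hun hm' e; first by [].
  + lia.
  have e2 := urec a q.
  have h1 : u a m' <= u a q.+2 by apply: u_le; lia.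
  have h2 : u a n' <= u a q.+1 by apply: u_le; lia.
  have hU : 1 <= u a q.+1 by have := u_lt ha (ltn0Sn q).
  have ha2 : a = 2.
    case: (ltngtP a 2) => // h3; first lia.
    exfalso; rewrite e2 in e h1; nia.
  subst a.
  have hV : u 2 q = 0 by rewrite e2 in e h1; nia.
  have hq : q = 0 by apply: (u_inj (a:=2)) => //.
  subst q. split => //. rewrite /= in e h1 h2 *. lia.
-
  exfalso.
  case: m' hm' e => [|[|k]] hm' e; try lia.
  have hmm : m < k.+2.
    case: (ltnP m k.+2) => // h; have := u_le ha h; nia.
  have h1 : u a m <= u a k.+1 by apply: u_le; lia.
  have h2 : u a n.+1 <= u a k.+1 by apply: u_le; lia.
  case: n hnn hun hm' h2 e => [|p] // hnn hun hm' h2 e.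
  rewrite urec in h2; rewrite urec in e; nia.
-
  exfalso. subst m'.
  case: n hnn hun e => [|p] // hnn hun e.
  rewrite urec in e.
  have hp : u a n' < u a p.+1 by apply: u_lt.
  have hm : m = p.+1.
    case: (ltngtP m p.+1) => // h.
    + have := u_le ha (i:=m) (j:=p); lia.
    + have := u_le ha (i:=p.+2) (j:=m). rewrite urec. nia.
  subst m.
  case: p hnn hun e hp => [|r] hnn hun e hp; first lia.
  rewrite urec in e.
  have hr := u_step r ha.
  case: (ltngtP n' r.+1) => h; try lia.
  + have := u_le ha (i:=n') (j:=r). nia.
  + subst n'. nia.
Qed.

Theorem theorem1p2 (a : nat) (ha : 1 < a) (x m n m' n' : nat) :
  0 < n -> 0 < n' -> (m, n) <> (m', n') ->
  x = u a m + a * u a n -> x = u a m' + a * u a n' ->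
  a = 2 /\ x = 4.
Proof.
move=> hn hn' hne -> e.
case: (ltngtP n n') => h.
- have [e1 e2] := @core a m' n' m n ha hn h (esym e). by rewrite e e2.
- exact: (@core a m n m' n' ha hn' h e).
- subst n'. have : u a m = u a m' by lia.
  move/(u_inj ha) => hm; subst m'. by case: hne.
Qed.
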